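(* For integers $i,j\ge1$, the central element $m_{i+j,i}=m_{(i+j,i)}(L_1,\dots,L_4)\in\mathbb Z S_4$ satisfies \begin{align*} \langle 1,m_{i+j,i}\rangle&=\tfrac{1}{24}(1+(-1)^j)\big(6^i3^j+6^i2^j+3^{i+j}+3^i+(10+9(-1)^i)(2^{i+j}+2^i)+22(-1)^i\big),\\ \langle s_1,m_{i+j,i}\rangle&=\tfrac{1}{24}(1-(-1)^j)\big(3^j6^i+2^j6^i+3^{i+j}+3^i+(4+3(-1)^i)2^{i+j}+(4-3(-1)^i)2^i\big),\\ \langle s_{12},m_{i+j,i}\rangle&=\tfrac{1}{24}(1+(-1)^j)\big(3^j6^i+2^j6^i+3^{i+j}+3^i+2^{i+j}+2^i-2(-1)^i\big),\\ \langle s_{13},m_{i+j,i}\rangle&=\tfrac{1}{24}(1+(-1)^j)\big(3^j6^i+2^j6^i+3^{i+j}+3^i-(2+3(-1)^i)(2^i+2^{i+j})-2(-1)^i\big),\\ \langle s_{123},m_{i+j,i}\rangle&=\tfrac{1}{24}(1-(-1)^j)\big(3^j6^i+2^j6^i+3^i+3^{i+j}+3(-1)^i(2^i-2^{i+j})-2(2^i+2^{i+j})\big). \end{align*}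
   Context: $S_4$ is the symmetric group on $\{1,2,3,4\}$, $\mathbb Z S_4$ its integral group ring. Let $s_1=(1\,2)$, $s_2=(2\,3)$, $s_3=(3\,4)$, $s_{12}=s_1s_2$, $s_{13}=s_1s_3$, $s_{123}=s_1s_2s_3$. The Jucys–Murphy elements are $L_1=0$ and $L_i=\sum_{k=1}^{i-1}(k\ i)$ for $i=2,3,4$; they pairwise commute. For a partition $\mu=(\mu_1,\dots,\mu_r)$, $m_\mu(x_1,\dots,x_4)$ is the monomial symmetric polynomial: the sum of all distinct monomials $x_1^{\alpha_1}\cdots x_4^{\alpha_4}$ with $(\alpha_1,\dots,\alpha_4)$ a rearrangement of $(\mu_1,\dots,\mu_r,0,\dots,0)$. For $w\in S_4$ and $h\in\mathbb Z S_4$, $\langle w,h\rangle$ denotes the coefficient of $w$ in $h$; for central $h$ this equals the coefficient of the class sum of the conjugacy class of $w$. *)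

(* Defs.v *)
From HB Require Import structures.
From mathcomp Require Import all_boot all_order all_algebra all_fingroup.
Set Implicit Arguments. Unset Strict Implicit. Unset Printing Implicit Defensive.
Import GRing.Theory.
Local Open Scope ring_scope.

(* The points {1,2,3,4} are represented by 'I_4 = {0,1,2,3} (point k+1 <-> k). *)
Definition S4 := {perm 'I_4}.

(* The integral group ring Z S_4: finitely supported = all functions S4 -> int;
   h w is the coefficient <w,h> of w in h. *)
Definition ZS4 := {ffun S4 -> int}.

Definition gr_of (w : S4) : ZS4 := [ffun u => (u == w)%:R].
Definition gr_one : ZS4 := gr_of 1%g.
Definition gr_mul (f g : ZS4) : ZS4 :=
  [ffun w => \sum_(u : S4) f u * g ((u^-1 * w)%g)].
Definition gr_exp (f : ZS4) (n : nat) : ZS4 := iter n (gr_mul f) gr_one.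
Definition gr_prod (s : seq ZS4) : ZS4 := foldr gr_mul gr_one s.

Definition tr (a b : 'I_4) : S4 := tperm a b.

(* Jucys-Murphy element L_{i+1} = sum_{k < i} (k i)  (so L_1 = 0) *)
Definition JM (i : 'I_4) : ZS4 := \sum_(k : 'I_4 | (k < i)%N) gr_of (tr k i).

(* monomial symmetric polynomial m_mu evaluated at (x_1..x_4): sum of all
   distinct monomials x^alpha, alpha a rearrangement of mu padded by zeros. *)
Definition exps (mu : seq nat) : seq {ffun 'I_4 -> nat} :=
  undup (map (fun s : S4 => [ffun k : 'I_4 => nth 0%N mu (s k)]) (enum [set: S4])).
Definition msym (mu : seq nat) (x : 'I_4 -> ZS4) : ZS4 :=
  \sum_(alpha <- exps mu) gr_prod [seq gr_exp (x k) (alpha k) | k <- enum 'I_4].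

Definition s1 : S4 := tr (inord 0) (inord 1).
Definition s2 : S4 := tr (inord 1) (inord 2).
Definition s3 : S4 := tr (inord 2) (inord 3).
Definition s12 : S4 := (s1 * s2)%g.
Definition s13 : S4 := (s1 * s3)%g.
Definition s123 : S4 := (s1 * s2 * s3)%g.

Definition m_ij (i j : nat) : ZS4 := msym [:: (i + j)%N; i] JM.

(* Main.v *)
Require Import Defs.
From HB Require Import structures.
From mathcomp Require Import all_boot all_order all_algebra all_fingroup.
From Stdlib Require Import Ring.
Import GRing.Theory.
Local Open Scope ring_scope.
Definition all24 : seq (seq nat) := [:: [:: 0; 1; 2; 3]; [:: 0; 1; 3; 2]; [:: 0; 2; 1; 3]; [:: 0; 2; 3; 1]; [:: 0; 3; 1; 2]; [:: 0; 3; 2; 1]; [:: 1; 0; 2; 3]; [:: 1; 0; 3; 2]; [:: 1; 2; 0; 3]; [:: 1; 2; 3; 0]; [:: 1; 3; 0; 2]; [:: 1; 3; 2; 0]; [:: 2; 0; 1; 3]; [:: 2; 0; 3; 1]; [:: 2; 1; 0; 3]; [:: 2; 1; 3; 0]; [:: 2; 3; 0; 1]; [:: 2; 3; 1; 0]; [:: 3; 0; 1; 2]; [:: 3; 0; 2; 1]; [:: 3; 1; 0; 2]; [:: 3; 1; 2; 0]; [:: 3; 2; 0; 1]; [:: 3; 2; 1; 0]].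
Definition Fl : seq (seq int) := [:: [:: 2; 2; 2; 2; 2; 2; 2; 2; 2; 2; 2; 2; 2; 2; 2; 2; 2; 2; 2; 2; 2; 2; 2; 2];
  [:: 6; -2; 6; -2; -2; -2; 6; -2; 6; -2; -2; -2; 6; -2; 6; -2; -2; -2; -2; -2; -2; -2; -2; -2];
  [:: 6; 2; -3; -1; -1; 5; 6; 2; -3; -1; -1; 5; -3; -1; -3; -1; -4; -4; -1; 5; -1; 5; -4; -4];
  [:: 4; 4; -2; -2; -2; -2; 4; 4; -2; -2; -2; -2; -2; -2; -2; -2; 4; 4; -2; -2; -2; -2; 4; 4];
  [:: 6; -6; -3; 3; 3; -3; 6; -6; -3; 3; 3; -3; -3; 3; -3; 3; 0; 0; 3; -3; 3; -3; 0; 0];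
  [:: 6; 6; 3; 3; 3; 3; -6; -6; -3; -3; -3; -3; -3; -3; 3; 3; 0; 0; -3; -3; 3; 3; 0; 0];
  [:: 4; -4; 2; -2; -2; 2; -4; 4; -2; 2; 2; -2; -2; 2; 2; -2; 4; -4; 2; -2; -2; 2; -4; 4];
  [:: 6; -2; 3; -1; -1; -5; -6; 2; -3; 1; 1; 5; -3; 1; 3; -1; -4; 4; 1; 5; -1; -5; 4; -4];
  [:: 6; 2; -6; -2; -2; 2; -6; -2; 6; 2; 2; -2; 6; 2; -6; -2; -2; 2; 2; -2; -2; 2; 2; -2];
  [:: 2; -2; -2; 2; 2; -2; -2; 2; 2; -2; -2; 2; 2; -2; -2; 2; 2; -2; -2; 2; 2; -2; -2; 2]].
Definition EVl : seq (seq int) := [:: [:: 0; 1; 2; 3]; [:: 0; 1; 2; -1]; [:: 0; 1; -1; 2]; [:: 0; 1; -1; 0]; [:: 0; 1; -1; -2]; [:: 0; -1; 1; 2]; [:: 0; -1; 1; 0]; [:: 0; -1; 1; -2]; [:: 0; -1; -2; 1]; [:: 0; -1; -2; -3]].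

Definition toc (s : S4) : seq nat := [seq val (s (inord k)) | k <- iota 0 4].

Lemma size_toc s : size (toc s) = 4%N.
Proof. by rewrite size_map size_iota. Qed.

Lemma nth_toc s (k : 'I_4) : nth 0%N (toc s) k = val (s k).
Proof. by rewrite (nth_map 0%N) ?size_iota // nth_iota // add0n inord_val. Qed.

Lemma toc_inj : injective toc.
Proof. move=> s t H; apply/permP => k; apply/val_inj; by rewrite -!nth_toc H. Qed.

Lemma uniq_toc s : uniq (toc s).
Proof.
rewrite map_inj_in_uniq ?iota_uniq // => a b; rewrite !mem_iota !add0n => Ha Hb /val_inj/perm_inj.
by move/(congr1 (@nat_of_ord 4)); rewrite !inordK.
Qed.

Lemma perm_all24 : perm_eq all24 (permutations (iota 0 4)).
Proof. by vm_compute. Qed.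

Lemma toc_all24 s : toc s \in all24.
Proof.
rewrite (perm_mem perm_all24) mem_permutations.
have sub : {subset toc s <= iota 0 4}.
  by move=> x /mapP [k _ ->]; rewrite mem_iota add0n ltn_ord.
have [_ E] := uniq_min_size (uniq_toc s) sub (eq_leq (etrans (size_iota 0 4) (esym (size_toc s)))).
by apply: uniq_perm; rewrite ?uniq_toc ?iota_uniq.
Qed.

Lemma uniq_all24 : uniq all24. Proof. by vm_compute. Qed.

Lemma perm_toc : perm_eq [seq toc s | s <- enum [set: S4]] all24.
Proof.
have U : uniq [seq toc s | s <- enum [set: S4]] by rewrite map_inj_uniq ?enum_uniq //; exact: toc_inj.
have sub : {subset [seq toc s | s <- enum [set: S4]] <= all24}.
  by move=> x /mapP [s _ ->]; apply: toc_all24.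
have SZ : (size all24 <= size [seq toc s | s <- enum [set: S4]])%N.
  by rewrite size_map -cardE cardsT card_Sn.
have [_ E] := uniq_min_size U sub SZ.
by apply: uniq_perm; rewrite ?U ?uniq_all24.
Qed.

Definition ofc (c : seq nat) : S4 := odflt 1%g [pick s : S4 | toc s == c].

Lemma ofcK s : ofc (toc s) = s.
Proof.
rewrite /ofc; case: pickP => [x /eqP H|H] /=; first exact: toc_inj.
by have := H s; rewrite eqxx.
Qed.

Lemma tocK c : c \in all24 -> toc (ofc c) = c.
Proof.
rewrite -(perm_mem perm_toc) => /mapP [s _ ->]; by rewrite ofcK.
Qed.

Lemma allw (P : S4 -> Prop) : (forall c, c \in all24 -> P (ofc c)) -> forall w, P w.
Proof. move=> H w; rewrite -(ofcK w); apply: H; exact: toc_all24. Qed.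

Definition cmul (a b : seq nat) := [seq nth 0%N b x | x <- a].
Definition cinv (a : seq nat) := [seq index k a | k <- iota 0 4].

Lemma tocM s t : toc (s * t)%g = cmul (toc s) (toc t).
Proof.
rewrite /cmul /toc -map_comp; apply: eq_map => k /=.
by rewrite permM -(nth_toc t (s (inord k))) /toc.
Qed.

Lemma tocV s : toc (s^-1)%g = cinv (toc s).
Proof.
rewrite /cinv /toc; apply/eq_in_map => k; rewrite mem_iota add0n => Hk.
set i := (s^-1)%g (inord k).
have -> : k = nth 0%N (toc s) i by rewrite nth_toc /i permKV /= inordK.
by rewrite index_uniq ?size_toc ?uniq_toc.
Qed.

Lemma sumS4 (F : S4 -> int) : \sum_(u : S4) F u = \sum_(c <- all24) F (ofc c).
Proof.
rewrite -(perm_big _ perm_toc) big_map.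
under eq_bigr do rewrite ofcK.
by rewrite big_enum /=; apply: eq_bigl => x; rewrite in_setT.
Qed.

Definition atc (l : seq int) (c : seq nat) : int := nth 0 l (index c all24).
Definition ofrep (l : seq int) : ZS4 := [ffun w => atc l (toc w)].

Lemma ofrepE l c : c \in all24 -> ofrep l (ofc c) = atc l c.
Proof. by move=> H; rewrite ffunE tocK. Qed.

Definition csum (l : seq int) : int := foldr (fun x a => x + a) 0 l.

Lemma big_csum (T : Type) (l : seq T) (f : T -> int) :
  \sum_(x <- l) f x = csum (map f l).
Proof. by elim: l => [|x l IH]; rewrite ?big_nil ?big_cons ?IH. Qed.

Lemma gr_mulE X Y w :
  gr_mul X Y w = \sum_(d <- all24) X (ofc d) * Y ((ofc d)^-1 * w)%g.
Proof. by rewrite ffunE sumS4. Qed.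

Definition cmulL (a b : seq int) (c : seq nat) : int :=
  csum [seq atc a d * atc b (cmul (cinv d) c) | d <- all24].

Lemma gr_mul_ofrep a b c : c \in all24 ->
  gr_mul (ofrep a) (ofrep b) (ofc c) = cmulL a b c.
Proof.
move=> Hc; rewrite gr_mulE big_csum /cmulL; congr csum; apply/eq_in_map => d Hd.
by rewrite !ffunE tocM tocV !tocK.
Qed.

Definition Flt (t : nat) := nth [::] Fl t.
Definition FT (t : nat) : ZS4 := ofrep (Flt t).
Definition ev (t k : nat) : int := nth 0 (nth [::] EVl t) k.

Definition check_prod := all (fun t => all (fun t' => all (fun c =>
   cmulL (Flt t) (Flt t') c == (if t == t' then 48%:R * atc (Flt t') c else 0))
   all24) (iota 0 10)) (iota 0 10).

Lemma check_prodT : check_prod. Proof. Time vm_compute. reflexivity. Qed.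

Definition isDiag (X : ZS4) (x : nat -> int) :=
  forall w, 48%:R * X w = \sum_(t <- iota 0 10) x t * FT t w.

Lemma gr_mulE0 X Y w : gr_mul X Y w = \sum_(u : S4) X u * Y ((u^-1) * w)%g.
Proof. by rewrite ffunE. Qed.

Lemma FT_prod t t' w : t \in iota 0 10 -> t' \in iota 0 10 ->
  gr_mul (FT t) (FT t') w = if t == t' then 48%:R * FT t' w else 0.
Proof.
move=> Ht Ht'; move: w; apply: allw => c Hc.
rewrite /FT gr_mul_ofrep // ofrepE //.
by have := check_prodT; move/allP/(_ t Ht)/allP/(_ t' Ht')/allP/(_ c Hc)/eqP.
Qed.

Lemma diag_mul {X Y : ZS4} {x y} : isDiag X x -> isDiag Y y ->
  isDiag (gr_mul X Y) (fun t => x t * y t).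
Proof.
move=> HX HY w.
apply: (mulfI (_ : 48%:R != 0 :> int)); first by [].
have E1 : 48%:R * (48%:R * gr_mul X Y w) = \sum_(u : S4)
   (\sum_(t <- iota 0 10) x t * FT t u) * (\sum_(t <- iota 0 10) y t * FT t ((u^-1) * w)%g).
  rewrite gr_mulE0 !mulr_sumr; apply: eq_bigr => u _.
  by rewrite -HX -HY mulrACA mulrA.
rewrite E1.
have E2 : \sum_(u : S4)
   (\sum_(t <- iota 0 10) x t * FT t u) * (\sum_(t <- iota 0 10) y t * FT t ((u^-1) * w)%g)
   = \sum_(t <- iota 0 10) \sum_(t' <- iota 0 10) x t * y t' * gr_mul (FT t) (FT t') w.
  under eq_bigr do rewrite mulr_suml.
  rewrite exchange_big /=; apply: eq_bigr => t _.
  under eq_bigr do rewrite mulr_sumr.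
  rewrite exchange_big /=; apply: eq_bigr => t' _.
  rewrite gr_mulE0 mulr_sumr; apply: eq_bigr => u _.
  by rewrite mulrACA.
rewrite E2 mulr_sumr; apply: eq_big_seq => t Ht.
rewrite (bigD1_seq t Ht (iota_uniq 0 10)) /= FT_prod // eqxx big1_seq ?addr0.
  by rewrite mulrCA.
move=> t' /andP [ne Ht']; rewrite FT_prod //.
by rewrite eq_sym (negbTE ne) mulr0.
Qed.

Lemma isDiag_ext {X : ZS4} {x y} : isDiag X x -> x =1 y -> isDiag X y.
Proof. move=> H E w; rewrite H; apply: eq_bigr => t _; by rewrite E. Qed.


Lemma isDiag_check (X : ZS4) x :
  (forall c, c \in all24 -> 48%:R * X (ofc c) = csum [seq x t * atc (Flt t) c | t <- iota 0 10]) ->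
  isDiag X x.
Proof.
move=> H; apply: allw => c Hc; rewrite H // big_csum; congr csum.
by apply/eq_in_map => t _; rewrite /FT ofrepE.
Qed.

Lemma ofc_eq c w : c \in all24 -> (ofc c == w) = (c == toc w).
Proof. by move=> Hc; rewrite -(inj_eq toc_inj) tocK. Qed.

Lemma toc1 : toc 1%g = iota 0 4.
Proof.
rewrite /toc -{2}(map_id (iota 0 4)); apply/eq_in_map => x; rewrite mem_iota add0n => Hx.
by rewrite perm1 /= inordK.
Qed.

Definition check_one := all (fun c => 48%:R * (c == iota 0 4)%:R ==
   csum [seq 1 * atc (Flt t) c | t <- iota 0 10]) all24.
Lemma check_oneT : check_one. Proof. by vm_compute. Qed.

Lemma diag_one : isDiag gr_one (fun _ => 1).
Proof.
apply: isDiag_check => c Hc; rewrite ffunE ofc_eq // toc1.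
by have := check_oneT; move/allP/(_ c Hc)/eqP.
Qed.

Lemma diag_exp (X : ZS4) x n : isDiag X x -> isDiag (gr_exp X n) (fun t => x t ^+ n).
Proof.
move=> HX; elim: n => [|n IH].
  change (isDiag gr_one (fun t => x t ^+ 0)).
  refine (isDiag_ext diag_one _) => t /=; by rewrite expr0.
change (isDiag (gr_mul X (gr_exp X n)) (fun t => x t ^+ n.+1)).
refine (isDiag_ext (diag_mul HX IH) _) => t /=; by rewrite exprS.
Qed.

Lemma diag_prod (s : seq 'I_4) (f : 'I_4 -> ZS4) (g : 'I_4 -> nat -> int) :
  (forall k, isDiag (f k) (g k)) ->
  isDiag (gr_prod (map f s)) (fun t => \prod_(k <- s) g k t).
Proof.
move=> H; elim: s => [|k s IH] /=.
  refine (isDiag_ext diag_one _) => t /=; by rewrite big_nil.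
refine (isDiag_ext (diag_mul (H k) IH) _) => t /=; by rewrite big_cons.
Qed.

Lemma diag_sum (A : Type) (l : seq A) (G : A -> ZS4) (g : A -> nat -> int) :
  (forall a, isDiag (G a) (g a)) ->
  isDiag (\sum_(a <- l) G a) (fun t => \sum_(a <- l) g a t).
Proof.
move=> H w; rewrite sum_ffunE mulr_sumr.
under eq_bigr do rewrite H.
rewrite exchange_big /=; apply: eq_bigr => t _; by rewrite mulr_suml.
Qed.

Definition ctr (a b : nat) :=
  [seq if x == a then b else if x == b then a else x | x <- iota 0 4].

Lemma toc_tr (a b : 'I_4) : toc (tperm a b) = ctr a b.
Proof.
rewrite /toc /ctr; apply/eq_in_map => x; rewrite mem_iota add0n => Hx.
have vx : val (inord x : 'I_4) = x := inordK Hx.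
case: tpermP => [E|E|E1 E2].
- by rewrite -E vx eqxx.
- by rewrite -E vx eqxx; case: eqP.
have n1 : x != val a by apply/eqP => h; apply: E1; apply: val_inj; rewrite vx.
have n2 : x != val b by apply/eqP => h; apply: E2; apply: val_inj; rewrite vx.
by rewrite vx (negbTE n1) (negbTE n2).
Qed.

Definition jmv (k : nat) (c : seq nat) : int :=
  csum [seq (if (n < k)%N then (c == ctr n k)%:R else 0) | n <- iota 0 4].

Lemma JM_ofc (k : 'I_4) c : c \in all24 -> JM k (ofc c) = jmv k c.
Proof.
move=> Hc; rewrite /JM sum_ffunE big_mkcond /=.
transitivity (\sum_(0 <= n < 4) (if (n < k)%N then (c == ctr n k)%:R else 0 : int)).
  rewrite big_mkord; apply: eq_bigr => i _; case: ifP => // _.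
  by rewrite ffunE ofc_eq // toc_tr.
by rewrite /index_iota subn0 big_csum.
Qed.

Definition check_JM := all (fun k => all (fun c => 48%:R * jmv k c ==
   csum [seq ev t k * atc (Flt t) c | t <- iota 0 10]) all24) (iota 0 4).
Lemma check_JMT : check_JM. Proof. by vm_compute. Qed.

Lemma diag_JM (k : 'I_4) : isDiag (JM k) (fun t => ev t k).
Proof.
apply: isDiag_check => c Hc; rewrite JM_ofc //.
have Hk : val k \in iota 0 4 by rewrite mem_iota add0n ltn_ord.
by have := check_JMT; move/allP/(_ _ Hk)/allP/(_ c Hc)/eqP.
Qed.

Lemma diag_msym (mu : seq nat) :
  isDiag (msym mu JM) (fun t => \sum_(a <- exps mu) \prod_(k <- enum 'I_4) ev t k ^+ a k).
Proof.
apply: diag_sum => a.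
exact: (diag_prod (enum 'I_4) (fun k => gr_exp (JM k) (a k)) (fun k t => ev t k ^+ a k)
   (fun k => diag_exp _ _ (a k) (diag_JM k))).
Qed.

Definition trunc (c : seq nat) := [seq minn x 2 | x <- c].
Definition codes12 := undup [seq trunc c | c <- all24].
Definition Kf (mu : seq nat) (c : seq nat) : {ffun 'I_4 -> nat} :=
  [ffun k : 'I_4 => nth 0%N mu (nth 0%N c k)].

Lemma nth_mu_min (mu : seq nat) x : size mu = 2%N -> nth 0%N mu (minn x 2%N) = nth 0%N mu x.
Proof.
move=> Hs; case: (ltnP x 2%N) => H //.
by rewrite !nth_default ?Hs.
Qed.

Lemma undup_map_in (T1 T2 : eqType) (f : T1 -> T2) (s : seq T1) :
  {in s &, injective f} -> undup (map f s) = map f (undup s).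
Proof.
elim: s => [|x s IH] //= Hinj.
have Hinj' : {in s &, injective f}.
  by move=> a b Ha Hb; apply: Hinj; rewrite inE ?Ha ?Hb orbT.
have -> : (f x \in map f s) = (x \in s).
  apply/mapP/idP => [[y Hy E]|Hx]; last by exists x.
  by rewrite (Hinj x y) ?inE ?eqxx ?Hy ?orbT.
by case: ifP => _; rewrite /= IH.
Qed.

Section Exps.
Variables i j : nat.
Hypotheses (hi : (1 <= i)%N) (hj : (1 <= j)%N).
Let mu := [:: (i + j)%N; i].

Lemma nth_mu_inj x y : (x <= 2)%N -> (y <= 2)%N -> nth 0%N mu x = nth 0%N mu y -> x = y.
Proof.
have h1 : (i + j)%N != i by rewrite -{2}(addn0 i) eqn_add2l -lt0n.
have h2 : (i + j)%N != 0%N by rewrite addn_eq0 negb_and -!lt0n hi.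
have h3 : i != 0%N by rewrite -lt0n.
case: x => [|[|[|x]]] // _; case: y => [|[|[|y]]] //= _.
- by move/eqP; rewrite (negbTE h1).
- by move/eqP; rewrite (negbTE h2).
- by move/eqP; rewrite eq_sym (negbTE h1).
- by move/eqP; rewrite (negbTE h3).
- by move/eqP; rewrite eq_sym (negbTE h2).
- by move/eqP; rewrite eq_sym (negbTE h3).
Qed.

Lemma exps_sum (G : {ffun 'I_4 -> nat} -> int) :
  \sum_(a <- exps mu) G a = \sum_(c <- codes12) G (Kf mu c).
Proof.
have E1 : exps mu = undup [seq Kf mu c | c <- [seq trunc (toc s) | s <- enum [set: S4]]].
  rewrite /exps -map_comp; congr undup; apply: eq_map => s.
  apply/ffunP => k; rewrite !ffunE /trunc (nth_map 0%N) ?size_toc ?ltn_ord //.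
  by rewrite nth_mu_min // nth_toc.
have Hinj : {in [seq trunc (toc s) | s <- enum [set: S4]] &, injective (Kf mu)}.
  move=> c d /mapP [s _ ->] /mapP [s' _ ->] E.
  apply: (@eq_from_nth _ 0%N); first by rewrite !size_map !size_iota.
  move=> n; rewrite size_map size_toc => Hn.
  have := congr1 (fun f : {ffun 'I_4 -> nat} => f (inord n : 'I_4)) E; rewrite !ffunE inordK //.
  apply: nth_mu_inj; by rewrite /trunc (nth_map 0%N) ?size_toc // geq_minr.
rewrite E1 undup_map_in // big_map.
apply: perm_big; apply: perm_undup.
apply: perm_mem; rewrite map_comp; apply: perm_map; exact: perm_toc.
Qed.

End Exps.

Definition cp0 (t : nat) (c : seq nat) : int :=
  foldr (fun n a => if nth 0%N c n == 0%N then ev t n * a else a) 1 (iota 0 4).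
Definition cp1 (t : nat) (c : seq nat) : int :=
  foldr (fun n a => if (nth 0%N c n <= 1)%N then ev t n * a else a) 1 (iota 0 4).

Definition RL (cw : seq nat) : seq (int * int * int) :=
  flatten [seq [seq (atc (Flt t) cw, cp0 t c, cp1 t c) | c <- codes12] | t <- iota 0 10].

Section Main.
Variables i j : nat.
Hypotheses (hi : (1 <= i)%N) (hj : (1 <= j)%N).
Let mu := [:: (i + j)%N; i].

Lemma rearr (a b c d : int) : a * b * (c * d) = b * c * (a * d).
Proof. by rewrite [a * b]mulrC mulrACA. Qed.

Definition termZ (r : int * int * int) : int := r.1.1 * r.1.2 ^+ j * r.2 ^+ i.

Lemma prod_split_gen (x : nat -> int) (c l : seq nat) :
  \prod_(n <- l) x n ^+ nth 0%N mu (nth 0%N c n) =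
  (foldr (fun n a => if nth 0%N c n == 0%N then x n * a else a) 1 l) ^+ j *
  (foldr (fun n a => if (nth 0%N c n <= 1)%N then x n * a else a) 1 l) ^+ i.
Proof.
elim: l => [|n l IH]; first by rewrite big_nil !expr1n mulr1.
rewrite big_cons IH /=.
case: (nth 0%N c n) => [|[|m]] /=.
- rewrite exprD !exprMn.
  by rewrite rearr.
- by rewrite exprMn mulrCA.
- by rewrite nth_nil expr0 mul1r.
Qed.

Lemma prod_Kf t c :
  \prod_(k <- enum 'I_4) ev t k ^+ (Kf mu c k) = (cp0 t c) ^+ j * (cp1 t c) ^+ i.
Proof.
under eq_bigr do rewrite ffunE.
rewrite -(big_map (@nat_of_ord 4) xpredT (fun n => ev t n ^+ nth 0%N mu (nth 0%N c n))).
by rewrite val_enum_ord prod_split_gen.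
Qed.

Lemma main_w w : 48%:R * m_ij i j w = \sum_(r <- RL (toc w)) termZ r.
Proof.
rewrite /m_ij (diag_msym [:: (i + j)%N; i] w) /RL big_flatten big_map.
apply: eq_bigr => t _; rewrite big_map.
rewrite (exps_sum _ _ hi hj) mulr_suml; apply: eq_bigr => c _.
by rewrite prod_Kf /termZ /= /FT ffunE mulrC mulrA.
Qed.
End Main.

Fixpoint pw {R : pzRingType} (x : R) (n : nat) : R :=
  if n is n'.+1 then x * pw x n' else 1.

Definition fac23 (n : nat) : nat * nat :=
  match n with 1 => (0, 0) | 2 => (1, 0) | 3 => (0, 1) | 4 => (2, 0)
  | 6 => (1, 1) | 9 => (0, 2) | _ => (0, 0) end%N.
Definition facz (p : int) : nat * nat * nat :=
  match p with Posz n => (0%N, (fac23 n).1, (fac23 n).2)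
  | Negz n => (1%N, (fac23 n.+1).1, (fac23 n.+1).2) end.
Definition sgnabs (z : int) : nat * nat :=
  match z with Posz n => (0%N, n) | Negz n => (1%N, n.+1) end.
Definition evfac (f : nat * nat * nat) : int := pw (-1) f.1.1 * pw 2%:R f.1.2 * pw 3%:R f.2.
Definition conv (r : int * int * int) := (sgnabs r.1.1, facz r.1.2, facz r.2).
Definition nz (r : int * int * int) := (r.1.2 != 0) && (r.2 != 0).
Definition okr (r : int * int * int) :=
  (r.1.2 == evfac (facz r.1.2)) && (r.2 == evfac (facz r.2)).
Definition termQ (i j : nat) (r : (nat * nat) * (nat * nat * nat) * (nat * nat * nat)) : rat :=
  pw (-1) r.1.1.1 * r.1.1.2%:R *
  (pw ((-1) ^+ j) r.1.2.1.1 * pw (2%:R ^+ j) r.1.2.1.2 * pw (3%:R ^+ j) r.1.2.2) *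
  (pw ((-1) ^+ i) r.2.1.1 * pw (2%:R ^+ i) r.2.1.2 * pw (3%:R ^+ i) r.2.2).

Lemma intr_pw (x : int) n : (pw x n)%:~R = pw (x%:~R) n :> rat.
Proof. by elim: n => [|n IH] //=; rewrite intrM IH. Qed.

Lemma intrX (x : int) n : (x ^+ n)%:~R = (x%:~R : rat) ^+ n.
Proof. by elim: n => [|n IH]; rewrite ?expr0 // !exprS intrM IH. Qed.

Lemma pw_exp (x : rat) n k : (pw x n) ^+ k = pw (x ^+ k) n.
Proof. by elim: n => [|n IH] /=; rewrite ?expr1n // exprMn IH. Qed.

Lemma evfacQ f k : ((evfac f)%:~R : rat) ^+ k =
  pw ((-1) ^+ k) f.1.1 * pw (2%:R ^+ k) f.1.2 * pw (3%:R ^+ k) f.2.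
Proof.
rewrite /evfac !intrM !intr_pw !exprMn !pw_exp.
by rewrite intrN.
Qed.

Section Cast.
Variables i j : nat.
Hypotheses (hi : (1 <= i)%N) (hj : (1 <= j)%N).

Lemma cast_sum (l : seq (int * int * int)) : all (fun r => nz r ==> okr r) l ->
  ((\sum_(r <- l) termZ i j r)%:~R : rat) = \sum_(r <- [seq conv r | r <- l & nz r]) termQ i j r.
Proof.
elim: l => [|r l IH]; first by rewrite !big_nil.
rewrite /= => /andP [Hr Hl]; rewrite big_cons intrD IH //.
case Hnz: (nz r) => /=.
  rewrite big_cons; congr (_ + _).
  have /andP [/eqP Hp /eqP Hq] := implyP Hr Hnz.
  case: r Hnz Hr Hp Hq => [[c p] q] /= _ _ Hp Hq.
  rewrite /termZ /termQ /= !intrM !intrX {1}Hp {1}Hq !evfacQ.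
  case: c => n /=; rewrite ?mul1r //.
  by rewrite mulr1 mulN1r NegzE intrN.
rewrite /termZ; move: Hnz; rewrite /nz; case/nandP => /negPn/eqP ->;
  by rewrite expr0n ?gtn_eqF ?mulr0 ?mul0r ?add0r.
Qed.
End Cast.

Lemma final_gen {i j} (hi : (1 <= i)%N) (hj : (1 <= j)%N) w cw : toc w = cw ->
  all (fun r => nz r ==> okr r) (RL cw) ->
  48%:R * ((m_ij i j w)%:~R : rat) = \sum_(r <- [seq conv r | r <- RL cw & nz r]) termQ i j r.
Proof.
move=> Hw Hok; rewrite -cast_sum // -Hw -main_w // intrM.
by [].
Qed.

Ltac compute_list H :=
  match type of H with _ = \sum_(r <- ?L) _ =>
    let v := eval vm_compute in L in
    rewrite (_ : L = v) in H; last by vm_compute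
  end.


Definition radd (x y : rat) : rat := x + y.
Definition rmul (x y : rat) : rat := x * y.
Definition ropp (x : rat) : rat := - x.
Definition rone : rat := 1.
Definition rzero : rat := 0.
Lemma addE (x y : rat) : x + y = radd x y. Proof. by []. Qed.
Lemma mulE (x y : rat) : x * y = rmul x y. Proof. by []. Qed.
Lemma oppE (x : rat) : - x = ropp x. Proof. by []. Qed.
Lemma oneE : 1 = rone. Proof. by []. Qed.
Lemma zeroE : 0 = rzero. Proof. by []. Qed.

Lemma rat_rt : @ring_theory rat rzero rone radd rmul (fun x y => radd x (ropp y)) ropp eq.
Proof.
split => //; rewrite /radd /rmul /ropp /rone /rzero.
- exact: add0r. - exact: addrC. - exact: addrA. - exact: mul1r. - exact: mulrC.
- exact: mulrA. - exact: mulrDl. - exact: subrr.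
Qed.
Add Ring ratRing : rat_rt.

Ltac runary n :=
  lazymatch n with
  | O => constr:(rzero)
  | S ?m => let r := runary m in constr:(radd rone r)
  end.
Ltac rtr t :=
  lazymatch t with
  | @Algebra.add _ ?a ?b => let a' := rtr a in let b' := rtr b in constr:(radd a' b')
  | @GRing.mul _ ?a ?b => let a' := rtr a in let b' := rtr b in constr:(rmul a' b')
  | @Algebra.opp _ ?a => let a' := rtr a in constr:(ropp a')
  | @Algebra.natmul _ (GRing.one _) ?n => let n' := eval compute in n in runary n'
  | GRing.one _ => constr:(rone)
  | @Algebra.zero _ => constr:(rzero)
  | _ => t
  end.
Ltac rnorm := lazymatch goal with |- ?a = ?b =>
  let a' := rtr a in let b' := rtr b in change (@eq rat a' b') end.

Lemma L48 (A B : rat) : 48%:R * (1 / 24%:R * A * B) = 2%:R * A * B.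
Proof.
have E : (48%:R : rat) * (1 / 24%:R) = 2%:R.
  by rewrite mul1r (_ : 48 = 2 * 24)%N // natrM -mulrA divff.
by rewrite !mulrA E.
Qed.


Lemma toc_s1 : toc s1 = ctr 0 1.
Proof. by rewrite /s1 /tr toc_tr !inordK. Qed.
Lemma toc_s12 : toc s12 = cmul (ctr 0 1) (ctr 1 2).
Proof. by rewrite /s12 tocM toc_s1 /s2 /tr toc_tr !inordK. Qed.
Lemma toc_s13 : toc s13 = cmul (ctr 0 1) (ctr 2 3).
Proof. by rewrite /s13 tocM toc_s1 /s3 /tr toc_tr !inordK. Qed.
Lemma toc_s123 : toc s123 = cmul (cmul (ctr 0 1) (ctr 1 2)) (ctr 2 3).
Proof. by rewrite /s123 tocM -/s12 toc_s12 /s3 /tr toc_tr !inordK. Qed.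

Lemma case0 {i j} (hi : (1 <= i)%N) (hj : (1 <= j)%N) :
  let m := m_ij i j in
  let e (n : nat) : rat := (-1) ^+ n in
  let P (b n : nat) : rat := (b%:R) ^+ n in
  (m 1%g)%:~R = 1 / 24%:R * (1 + e j) *
        (P 6%N i * P 3%N j + P 6%N i * P 2%N j + P 3%N (i + j)%N + P 3%N i
         + (10%:R + 9%:R * e i) * (P 2%N (i + j)%N + P 2%N i) + 22%:R * e i).
Proof.
move=> m e P; rewrite /m /e /P.
have H := final_gen hi hj _ _ toc1 ltac:(by vm_compute).
compute_list H.
rewrite !big_cons big_nil /termQ /= in H.
apply: (mulfI (_ : 48%:R != 0 :> rat)); first by [].
rewrite H L48 !exprD (_ : 6 = 2 * 3)%N // natrM exprMn.
rewrite -(signr_odd _ i) -(signr_odd _ j).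
set A := (2%:R : rat) ^+ i; set B := (2%:R : rat) ^+ j.
set C := (3%:R : rat) ^+ i; set D := (3%:R : rat) ^+ j.
by case: (odd i); case: (odd j); rewrite ?expr0 ?expr1; rnorm; ring.
Qed.

Lemma case1 {i j} (hi : (1 <= i)%N) (hj : (1 <= j)%N) :
  let m := m_ij i j in
  let e (n : nat) : rat := (-1) ^+ n in
  let P (b n : nat) : rat := (b%:R) ^+ n in
  (m s1)%:~R = 1 / 24%:R * (1 - e j) *
        (P 3%N j * P 6%N i + P 2%N j * P 6%N i + P 3%N (i + j)%N + P 3%N i
         + (4%:R + 3%:R * e i) * P 2%N (i + j)%N + (4%:R - 3%:R * e i) * P 2%N i).
Proof.
move=> m e P; rewrite /m /e /P.
have H := final_gen hi hj _ _ toc_s1 ltac:(by vm_compute).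
compute_list H.
rewrite !big_cons big_nil /termQ /= in H.
apply: (mulfI (_ : 48%:R != 0 :> rat)); first by [].
rewrite H L48 !exprD (_ : 6 = 2 * 3)%N // natrM exprMn.
rewrite -(signr_odd _ i) -(signr_odd _ j).
set A := (2%:R : rat) ^+ i; set B := (2%:R : rat) ^+ j.
set C := (3%:R : rat) ^+ i; set D := (3%:R : rat) ^+ j.
by case: (odd i); case: (odd j); rewrite ?expr0 ?expr1; rnorm; ring.
Qed.

Lemma case2 {i j} (hi : (1 <= i)%N) (hj : (1 <= j)%N) :
  let m := m_ij i j in
  let e (n : nat) : rat := (-1) ^+ n in
  let P (b n : nat) : rat := (b%:R) ^+ n in
  (m s12)%:~R = 1 / 24%:R * (1 + e j) *
        (P 3%N j * P 6%N i + P 2%N j * P 6%N i + P 3%N (i + j)%N + P 3%N i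
         + P 2%N (i + j)%N + P 2%N i - 2%:R * e i).
Proof.
move=> m e P; rewrite /m /e /P.
have H := final_gen hi hj _ _ toc_s12 ltac:(by vm_compute).
compute_list H.
rewrite !big_cons big_nil /termQ /= in H.
apply: (mulfI (_ : 48%:R != 0 :> rat)); first by [].
rewrite H L48 !exprD (_ : 6 = 2 * 3)%N // natrM exprMn.
rewrite -(signr_odd _ i) -(signr_odd _ j).
set A := (2%:R : rat) ^+ i; set B := (2%:R : rat) ^+ j.
set C := (3%:R : rat) ^+ i; set D := (3%:R : rat) ^+ j.
by case: (odd i); case: (odd j); rewrite ?expr0 ?expr1; rnorm; ring.
Qed.

Lemma case3 {i j} (hi : (1 <= i)%N) (hj : (1 <= j)%N) :
  let m := m_ij i j in
  let e (n : nat) : rat := (-1) ^+ n in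
  let P (b n : nat) : rat := (b%:R) ^+ n in
  (m s13)%:~R = 1 / 24%:R * (1 + e j) *
        (P 3%N j * P 6%N i + P 2%N j * P 6%N i + P 3%N (i + j)%N + P 3%N i
         - (2%:R + 3%:R * e i) * (P 2%N i + P 2%N (i + j)%N) - 2%:R * e i).
Proof.
move=> m e P; rewrite /m /e /P.
have H := final_gen hi hj _ _ toc_s13 ltac:(by vm_compute).
compute_list H.
rewrite !big_cons big_nil /termQ /= in H.
apply: (mulfI (_ : 48%:R != 0 :> rat)); first by [].
rewrite H L48 !exprD (_ : 6 = 2 * 3)%N // natrM exprMn.
rewrite -(signr_odd _ i) -(signr_odd _ j).
set A := (2%:R : rat) ^+ i; set B := (2%:R : rat) ^+ j.
set C := (3%:R : rat) ^+ i; set D := (3%:R : rat) ^+ j.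
by case: (odd i); case: (odd j); rewrite ?expr0 ?expr1; rnorm; ring.
Qed.

Lemma case4 {i j} (hi : (1 <= i)%N) (hj : (1 <= j)%N) :
  let m := m_ij i j in
  let e (n : nat) : rat := (-1) ^+ n in
  let P (b n : nat) : rat := (b%:R) ^+ n in
  (m s123)%:~R = 1 / 24%:R * (1 - e j) *
        (P 3%N j * P 6%N i + P 2%N j * P 6%N i + P 3%N i + P 3%N (i + j)%N
         + 3%:R * e i * (P 2%N i - P 2%N (i + j)%N) - 2%:R * (P 2%N i + P 2%N (i + j)%N)).
Proof.
move=> m e P; rewrite /m /e /P.
have H := final_gen hi hj _ _ toc_s123 ltac:(by vm_compute).
compute_list H.
rewrite !big_cons big_nil /termQ /= in H.
apply: (mulfI (_ : 48%:R != 0 :> rat)); first by [].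
rewrite H L48 !exprD (_ : 6 = 2 * 3)%N // natrM exprMn.
rewrite -(signr_odd _ i) -(signr_odd _ j).
set A := (2%:R : rat) ^+ i; set B := (2%:R : rat) ^+ j.
set C := (3%:R : rat) ^+ i; set D := (3%:R : rat) ^+ j.
by case: (odd i); case: (odd j); rewrite ?expr0 ?expr1; rnorm; ring.
Qed.

Theorem proposition2p6 (i j : nat) (hi : (1 <= i)%N) (hj : (1 <= j)%N) :
  let m := m_ij i j in
  let e (n : nat) : rat := (-1) ^+ n in
  let P (b n : nat) : rat := (b%:R) ^+ n in
  [/\ (m 1%g)%:~R = 1 / 24%:R * (1 + e j) *
        (P 6%N i * P 3%N j + P 6%N i * P 2%N j + P 3%N (i + j)%N + P 3%N i
         + (10%:R + 9%:R * e i) * (P 2%N (i + j)%N + P 2%N i) + 22%:R * e i),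
      (m s1)%:~R = 1 / 24%:R * (1 - e j) *
        (P 3%N j * P 6%N i + P 2%N j * P 6%N i + P 3%N (i + j)%N + P 3%N i
         + (4%:R + 3%:R * e i) * P 2%N (i + j)%N + (4%:R - 3%:R * e i) * P 2%N i),
      (m s12)%:~R = 1 / 24%:R * (1 + e j) *
        (P 3%N j * P 6%N i + P 2%N j * P 6%N i + P 3%N (i + j)%N + P 3%N i
         + P 2%N (i + j)%N + P 2%N i - 2%:R * e i),
      (m s13)%:~R = 1 / 24%:R * (1 + e j) *
        (P 3%N j * P 6%N i + P 2%N j * P 6%N i + P 3%N (i + j)%N + P 3%N i
         - (2%:R + 3%:R * e i) * (P 2%N i + P 2%N (i + j)%N) - 2%:R * e i)
    & (m s123)%:~R = 1 / 24%:R * (1 - e j) *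
        (P 3%N j * P 6%N i + P 2%N j * P 6%N i + P 3%N i + P 3%N (i + j)%N
         + 3%:R * e i * (P 2%N i - P 2%N (i + j)%N) - 2%:R * (P 2%N i + P 2%N (i + j)%N))].
Proof.
move=> m e P; split.
- exact: (case0 hi hj).
- exact: (case1 hi hj).
- exact: (case2 hi hj).
- exact: (case3 hi hj).
- exact: (case4 hi hj).
Qed.
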